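(* Let $n\ge 2$ and let $P_n$ be the path on $n$ vertices. Then $$\tau(P_n)=\begin{cases}1 & \text{if } n\equiv 0 \pmod 4,\\ \lfloor n/4\rfloor & \text{if } n\equiv 1 \pmod 4,\\ (\lfloor n/4\rfloor+1)^2 & \text{if } n\equiv 2 \pmod 4,\\ \lfloor n/4\rfloor+2 & \text{if } n\equiv 3 \pmod 4.\end{cases}$$
   Context: A set $D \subseteq V(G)$ is a total dominating set of a graph $G$ if every vertex of $G$ has a neighbor in $D$. $\gamma_t(G)$ is the minimum cardinality of a total dominating set; a minimum one is a $\gamma_t(G)$-set, and $\tau(G)$ is the number of $\gamma_t(G)$-sets. *)

(* Defs.v *)
From mathcomp Require Import all_boot.
Set Implicit Arguments. Unset Strict Implicit. Unset Printing Implicit Defensive.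

(* A simple graph is a symmetric irreflexive relation [e] on a finite type. *)

Definition is_tds (T : finType) (e : rel T) (D : {set T}) : bool :=
  [forall v : T, [exists u in D, e v u]].

(* gamma_t(G): the minimum cardinality of a total dominating set
   (defined as the min over all TDSs; if none exists the value is #|T|). *)
Definition gamma_t (T : finType) (e : rel T) : nat :=
  \big[minn/#|T|]_(D : {set T} | is_tds e D) #|D|.

Definition is_gamma_t_set (T : finType) (e : rel T) (D : {set T}) : bool :=
  is_tds e D && (#|D| == gamma_t e).

Definition tau (T : finType) (e : rel T) : nat :=
  #|[set D : {set T} | is_gamma_t_set e D]|.

Definition path_rel (n : nat) : rel 'I_n :=
  fun i j => (i.+1 == j :> nat) || (j.+1 == i :> nat).
Arguments path_rel n : clear implicits.

(* Main.v *)
Require Import Defs.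
From mathcomp Require Import all_boot.
From mathcomp Require Import zify.
Set Implicit Arguments. Unset Strict Implicit. Unset Printing Implicit Defensive.

Fixpoint bl (n : nat) : seq (seq bool) :=
  if n is n'.+1 then map (cons true) (bl n') ++ map (cons false) (bl n') else [:: [::]].

Lemma count_bl n (P : pred (seq bool)) :
  count P (bl n.+1) = count (fun s => P (true :: s)) (bl n) + count (fun s => P (false :: s)) (bl n).
Proof. by rewrite /= count_cat !count_map. Qed.

Lemma mem_map_cons (b c : bool) s L : (b :: s \in map (cons c) L) = (b == c) && (s \in L).
Proof.
apply/mapP/andP => [[t Ht [-> ->]]|[/eqP -> Hs]]; last by exists s.
by rewrite eqxx.
Qed.

Lemma mem_bl n s : (s \in bl n) = (size s == n).
Proof.
elim: n s => [|n IH] [|x s] //=.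
- by rewrite mem_cat; case: orP => // -[] /mapP [t _].
- by rewrite mem_cat !mem_map_cons IH eqSS; case: (size s == n); rewrite ?andbF ?andbT ?orbF //; case: (x : bool).
Qed.

Lemma uniq_bl n : uniq (bl n).
Proof.
elim: n => //= n IH.
rewrite cat_uniq !map_inj_uniq ?IH //=; try by move=> ? ? [].
rewrite andbT; apply/hasPn => s /mapP [t _ ->]; by rewrite mem_map_cons.
Qed.

Fixpoint good (s : seq bool) : bool :=
  match s with
  | x :: ((y :: t) as s') => (x || head false t) && good s'
  | _ => true
  end.
Definition tdsL (s : seq bool) := good s && nth false s 1.

Lemma goodE s : good s = all (fun i => nth false s i.-1 || nth false s i.+1) (iota 1 (size s).-1).
Proof.
elim: s => [|x s IH] //. case: s IH => [|y t] IH //.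
have -> : good [:: x, y & t] = (x || head false t) && good (y :: t) by [].
rewrite IH /= -[2]/(1+1) iotaDl all_map.
have -> : head false t = nth false t 0 by case: t {IH}.
congr (_ && _); apply: eq_in_all => i; rewrite mem_iota => /andP [i1 _] /=.
by case: i i1.
Qed.

Lemma tdsLP s : 0 < size s -> reflect (forall i, i < size s -> ((0 < i) && nth false s i.-1) || nth false s i.+1) (tdsL s).
Proof.
move=> hs; rewrite /tdsL goodE; apply: (iffP andP) => [[/allP H H1] [|i] Hi | H].
- by rewrite H1.
- have := H i.+1; rewrite mem_iota /=; apply; lia.
- split; last by have := H 0 hs.
  apply/allP => i; rewrite mem_iota => /andP [i1 i2].
  have := H i; rewrite i1 /=; apply; lia.
Qed.

Section Bridge.
Variable N : nat.
Definition fD (D : {set 'I_N}) : seq bool := [seq x \in D | x <- enum 'I_N].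

Lemma size_fD D : size (fD D) = N.
Proof. by rewrite size_map size_enum_ord. Qed.

Lemma nth_fD D (x : 'I_N) : nth false (fD D) x = (x \in D).
Proof. by rewrite /fD (nth_map x) ?size_enum_ord // nth_ord_enum. Qed.

Lemma nth_fD_ge D j : N <= j -> nth false (fD D) j = false.
Proof. by move=> h; rewrite nth_default // size_fD. Qed.

Lemma count_fD D : count id (fD D) = #|D|.
Proof. by rewrite /fD count_map cardE size_filter -enumT. Qed.

Lemma tds_fD D : 0 < N -> is_tds (path_rel N) D = tdsL (fD D).
Proof.
move=> hN; apply/forallP/tdsLP; rewrite ?size_fD //.
- move=> H i Hi.
  have /existsP [u /andP [uD /orP [/eqP e | /eqP e]]] := H (Ordinal Hi).
  + by rewrite /= e nth_fD uD orbT.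
  + by move: e => /= <-; rewrite /= nth_fD uD.
- move=> H v; have := H v (ltn_ord v); case/orP => [/andP [v0 hv] | hv].
  + have lt : v.-1 < N by have := ltn_ord v; lia.
    apply/existsP; exists (Ordinal lt).
    rewrite -(nth_fD D (Ordinal lt)) /= hv /path_rel /= prednK // eqxx orbT //.
  + case: (ltnP v.+1 N) => [lt|ge]; last by rewrite nth_fD_ge in hv.
    apply/existsP; exists (Ordinal lt).
    by rewrite -(nth_fD D (Ordinal lt)) /= hv /path_rel /= eqxx.
Qed.

Lemma card_fD (P : pred (seq bool)) : #|[set D : {set 'I_N} | P (fD D)]| = count P (bl N).
Proof.
rewrite -size_filter cardE -(size_map fD).
have inj : injective fD by move=> D1 D2 e; apply/setP => x; rewrite -!nth_fD e.
apply: perm_size; apply: uniq_perm.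
- by rewrite (map_inj_uniq inj) enum_uniq.
- by rewrite filter_uniq // uniq_bl.
move=> s; rewrite mem_filter mem_bl; apply/mapP/andP.
- by move=> [D HD ->]; rewrite mem_enum inE in HD; rewrite HD size_fD.
- move=> [Ps /eqP Hs].
  have e : fD [set x : 'I_N | nth false s x] = s.
    apply: (@eq_from_nth _ false); first by rewrite size_fD Hs.
    move=> i; rewrite size_fD => Hi.
    by rewrite -[i]/(nat_of_ord (Ordinal Hi)) nth_fD inE.
  by exists [set x : 'I_N | nth false s x]; rewrite ?mem_enum ?inE e.
Qed.
End Bridge.
Definition G n (a b : bool) k :=
  count (fun t => good [:: a, b & t] && (count id [:: a, b & t] == k)) (bl n).

Lemma G_false n a k : G n.+1 false a k = G n a true k.
Proof.
rewrite /G count_bl [X in _ + X](@eq_count _ _ pred0) ?count_pred0 ?addn0 //.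
Qed.

Lemma G_true n a k : G n.+1 true a k.+1 = G n a true k + G n a false k.
Proof.
by rewrite /G count_bl; congr (_ + _); apply: eq_count => t /=; rewrite add1n eqSS.
Qed.

Lemma G_true0 n a : G n.+1 true a 0 = 0.
Proof.
rewrite /G (@eq_count _ _ pred0) ?count_pred0 // => t /=.
by rewrite add1n andbF.
Qed.

Definition Spec n a b m c := forall k, k <= m -> G n a b k = (k == m) * c.

Lemma stepF n a m c : Spec n a true m c -> Spec n.+1 false a m c.
Proof. by move=> H k Hk; rewrite G_false H. Qed.

Lemma stepT n a mt ct mf cf m c : Spec n a true mt ct -> Spec n a false mf cf ->
  m = (minn mt mf).+1 ->
  c = (if mt < mf then ct else if mf < mt then cf else ct + cf) ->
  Spec n.+1 true a m c.
Proof.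
move=> Ht Hf -> -> [|k] Hk; first by rewrite G_true0.
have hk : k <= minn mt mf by lia.
rewrite G_true Ht ?Hf; try lia.
rewrite eqSS; case: (eqVneq k (minn mt mf)) => [->|ne].
- by case: (ltngtP mt mf) => h /=; lia.
- rewrite !ltn_eqF //; lia.
Qed.

Definition S4 n m00 c00 m01 c01 m10 c10 m11 c11 :=
  [/\ Spec n false false m00 c00, Spec n false true m01 c01,
      Spec n true false m10 c10 & Spec n true true m11 c11].

Lemma S4_step n m00 c00 m01 c01 m10 c10 m11 c11 m10' c10' m11' c11' :
  S4 n m00 c00 m01 c01 m10 c10 m11 c11 ->
  m10' = (minn m01 m00).+1 ->
  c10' = (if m01 < m00 then c01 else if m00 < m01 then c00 else c01 + c00) ->
  m11' = (minn m11 m10).+1 ->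
  c11' = (if m11 < m10 then c11 else if m10 < m11 then c10 else c11 + c10) ->
  S4 n.+1 m01 c01 m11 c11 m10' c10' m11' c11'.
Proof.
move=> [H00 H01 H10 H11] e1 e2 e3 e4; split.
- exact: stepF.
- exact: stepF.
- exact: stepT H01 H00 e1 e2.
- exact: stepT H11 H10 e3 e4.
Qed.

Ltac sidec := first [lia | repeat (case: ltnP => ?); nia].

Lemma specs p :
  S4 (4*p+1) (2*p+2) (p*(p+1)) (2*p+2) (p+1) (2*p+2) p (2*p+2) 1 ->
  [/\ S4 (4*p+2) (2*p+2) (p+1) (2*p+2) 1 (2*p+3) ((p+1)^2) (2*p+3) (p+1),
      S4 (4*p+3) (2*p+2) 1 (2*p+3) (p+1) (2*p+3) (p+2) (2*p+4) ((p+1)*(p+2)),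
      S4 (4*p+4) (2*p+3) (p+1) (2*p+4) ((p+1)*(p+2)) (2*p+3) 1 (2*p+4) (p+2) &
      S4 (4*p.+1+1) (2*p.+1+2) (p.+1*(p.+1+1)) (2*p.+1+2) (p.+1+1) (2*p.+1+2) p.+1 (2*p.+1+2) 1].
Proof.
move=> H1.
have H2 : S4 (4*p+2) (2*p+2) (p+1) (2*p+2) 1 (2*p+3) ((p+1)^2) (2*p+3) (p+1).
  rewrite (_ : 4*p+2 = (4*p+1).+1); last lia.
  apply: S4_step H1 _ _ _ _; sidec.
have H3 : S4 (4*p+3) (2*p+2) 1 (2*p+3) (p+1) (2*p+3) (p+2) (2*p+4) ((p+1)*(p+2)).
  rewrite (_ : 4*p+3 = (4*p+2).+1); last lia.
  apply: S4_step H2 _ _ _ _; sidec.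
have H4 : S4 (4*p+4) (2*p+3) (p+1) (2*p+4) ((p+1)*(p+2)) (2*p+3) 1 (2*p+4) (p+2).
  rewrite (_ : 4*p+4 = (4*p+3).+1); last lia.
  apply: S4_step H3 _ _ _ _; sidec.
split => //.
rewrite (_ : 4*p.+1+1 = (4*p+4).+1); last lia.
rewrite (_ : 2*p.+1+2 = 2*p+4); last lia.
rewrite (_ : p.+1+1 = p+2); last lia.
rewrite (_ : p.+1*(p+2) = (p+1)*(p+2)); last lia.
apply: S4_step H4 _ _ _ _; sidec.
Qed.
Lemma base1 : S4 (4*0+1) (2*0+2) (0*(0+1)) (2*0+2) (0+1) (2*0+2) 0 (2*0+2) 1.
Proof. by split; move=> [|[|[|k]]]. Qed.

Lemma spec1 p : S4 (4*p+1) (2*p+2) (p*(p+1)) (2*p+2) (p+1) (2*p+2) p (2*p+2) 1.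
Proof.
elim: p => [|p IH]; first exact: base1.
by case: (specs IH).
Qed.

Lemma big_minn_le (I : finType) (P : pred I) (F : I -> nat) x j :
  P j -> \big[minn/x]_(i | P i) F i <= F j.
Proof.
move=> Pj; have : j \in index_enum I by rewrite mem_index_enum.
elim: (index_enum I) => // a r IH; rewrite inE big_cons => /orP [/eqP <-|jr].
- by rewrite Pj geq_minl.
- by case: (P a); rewrite ?geq_min IH ?orbT.
Qed.

Lemma tau_spec m m1 c1 m2 c2 M : Spec m false true m1 c1 -> Spec m true true m2 c2 ->
  M <= m1 -> M <= m2 -> 0 < (M == m1) * c1 + (M == m2) * c2 ->
  tau (path_rel m.+2) = (M == m1) * c1 + (M == m2) * c2.
Proof.
move=> H1 H2 hM1 hM2 hpos.
have cardk k : #|[set D : {set 'I_m.+2} | is_tds (path_rel m.+2) D && (#|D| == k)]|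
    = G m false true k + G m true true k.
  have -> : [set D : {set 'I_m.+2} | is_tds (path_rel m.+2) D && (#|D| == k)]
      = [set D | (fun s => tdsL s && (count id s == k)) (fD D)].
    by apply/setP => D; rewrite !inE tds_fD // count_fD.
  rewrite (@card_fD m.+2 (fun s => tdsL s && (count id s == k))) !count_bl.
  rewrite [X in X + _ + _](@eq_count _ _ (fun t => good [:: true, true & t] && (count id [:: true, true & t] == k))); last first.
    by move=> t; rewrite /tdsL /= andbT.
  rewrite [X in _ + X + _](@eq_count _ _ pred0); last first.
    by move=> t; rewrite /tdsL /= andbF.
  rewrite [X in _ + (X + _)](@eq_count _ _ (fun t => good [:: false, true & t] && (count id [:: false, true & t] == k))); last first.
    by move=> t; rewrite /tdsL /= andbT.
  rewrite [X in _ + (_ + X)](@eq_count _ _ pred0); last first.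
    by move=> t; rewrite /tdsL /= andbF.
  by rewrite !count_pred0 !addn0 addnC.
have hM : G m false true M + G m true true M = (M == m1) * c1 + (M == m2) * c2.
  by rewrite H1 // H2.
have low k : k < M -> G m false true k + G m true true k = 0.
  move=> hk; rewrite H1 ?H2; try lia.
have [D0 HD0] : exists D0, is_tds (path_rel m.+2) D0 && (#|D0| == M).
  have : 0 < #|[set D : {set 'I_m.+2} | is_tds (path_rel m.+2) D && (#|D| == M)]|
    by rewrite cardk hM.
  rewrite card_gt0 => /set0Pn [D0]; rewrite inE => ?; by exists D0.
have gE : gamma_t (path_rel m.+2) = M.
  move/andP: HD0 => [t0 /eqP c0].
  rewrite /gamma_t; apply/eqP; rewrite eqn_leq; apply/andP; split.
  - by rewrite -c0; apply: big_minn_le.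
  - apply: (big_ind (fun x => M <= x)).
    + have := max_card D0; rewrite c0 card_ord; lia.
    + by move=> x y hx hy; rewrite leq_min hx hy.
    + move=> D tD; rewrite leqNgt; apply/negP => lt.
      have : 0 < #|[set D' : {set 'I_m.+2} | is_tds (path_rel m.+2) D' && (#|D'| == #|D|)]|.
        by rewrite card_gt0; apply/set0Pn; exists D; rewrite inE tD eqxx.
      by rewrite cardk low.
rewrite /tau.
have -> : [set D | is_gamma_t_set (path_rel m.+2) D]
    = [set D | is_tds (path_rel m.+2) D && (#|D| == M)].
  by apply/setP => D; rewrite !inE /is_gamma_t_set gE.
by rewrite cardk hM.
Qed.

Lemma base0 : Spec 0 false true 2 0 /\ Spec 0 true true 2 1.
Proof. by split; move=> [|[|[|k]]]. Qed.

Theorem theorem5p1 (n : nat) (hn : 2 <= n) :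
  tau (path_rel n) =
    if n %% 4 == 0 then 1
    else if n %% 4 == 1 then n %/ 4
    else if n %% 4 == 2 then (n %/ 4 + 1) ^ 2
    else n %/ 4 + 2.
Proof.
case: n hn => [|[|m]] // _.
case: m => [|m].
  by case: base0 => H1 H2; rewrite (tau_spec (M := 2) H1 H2).
have Hm : m = 4 * (m %/ 4) + m %% 4 by rewrite {1}(divn_eq m 4) mulnC.
have hs : m %% 4 < 4 by rewrite ltn_mod.
move: Hm hs; set p := m %/ 4; set s := m %% 4 => Hm hs.
have [[_ A01 _ A11] [_ B01 _ B11] [_ C01 _ C11] [_ D01 _ D11]] := specs (spec1 p).
have [_ E01 _ E11] := spec1 p.
rewrite Hm.
case: s hs {Hm} => [|[|[|[|s]]]] // _.
- rewrite addn0 (_ : (4*p).+1 = 4*p+1); last lia.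
  rewrite (tau_spec (M := 2*p+2) E01 E11); try lia; rewrite eqxx.
  rewrite (_ : (4*p+1).+2 %% 4 = 3); last lia.
  rewrite (_ : (4*p+1).+2 %/ 4 = p); last lia.
  simpl; lia.
- rewrite (_ : (4*p+1).+1 = 4*p+2); last lia.
  rewrite (tau_spec (M := 2*p+2) A01 A11); try lia.
  rewrite (_ : (4*p+2).+2 %% 4 = 0); last lia.
  simpl; lia.
- rewrite (_ : (4*p+2).+1 = 4*p+3); last lia.
  rewrite (tau_spec (M := 2*p+3) B01 B11); try lia.
  rewrite (_ : (4*p+3).+2 %% 4 = 1); last lia.
  rewrite (_ : (4*p+3).+2 %/ 4 = p+1); last lia.
  simpl; lia.
- rewrite (_ : (4*p+3).+1 = 4*p+4); last lia.
  rewrite (tau_spec (M := 2*p+4) C01 C11); try lia.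
  rewrite (_ : (4*p+4).+2 %% 4 = 2); last lia.
  rewrite (_ : (4*p+4).+2 %/ 4 = p+1); last lia.
  simpl; nia.
Qed.
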